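(* Let $j^1,j^2$ be twice differentiable functions of $(\rho_1,\rho_2)$ near a point, and at that point write $j^\alpha_\beta=\partial j^\alpha/\partial\rho_\beta$, $j^\alpha_{\beta\gamma}=\partial^2 j^\alpha/\partial\rho_\beta\partial\rho_\gamma$. Assume $j^1_2\,j^2_1\neq0$ and $\Delta^2:=(j^1_1-j^2_2)^2+4j^1_2j^2_1>0$, $\Delta>0$. Let $\mathbf{R}$ be any invertible $2\times2$ matrix with $\mathbf{R}\mathbf{J}\mathbf{R}^{-1}=\mathrm{diag}(v_+,v_-)$, $v_\pm=\tfrac12(j^1_1+j^2_2\pm\Delta)$, and let $\mathbf{G}^1,\mathbf{G}^2$ be the associated mode coupling matrices. Then: (a) $G^1_{11}=G^2_{22}=0$ if and only if $$j^2_1(2j^1_{12}+j^2_{22})+j^1_2j^2_{11}-j^1_{11}(j^2_2-j^1_1)=0\quad\text{and}\quad j^1_2(2j^2_{12}+j^1_{11})+j^2_1j^1_{22}+j^2_{22}(j^2_2-j^1_1)=0.$$ (b) Assume the two conditions in (a) hold, and set $P:=(j^2_1)^2j^1_{22}+j^1_2j^2_1j^1_{11}$ and $Q:=j^2_1j^2_{22}+j^1_2j^2_{11}$. Then - $G^1_{22}=0$ if and only if $P=\tfrac12(j^1_1-j^2_2-\Delta)\,Q$; - $G^2_{11}=0$ if and only if $P=\tfrac12(j^1_1-j^2_2+\Delta)\,Q$. Consequently: $G^1_{22}=G^2_{11}=0$ iff $j^2_1j^1_{22}+j^1_2j^1_{11}=0$ and $j^2_1j^2_{22}+j^1_2j^2_{11}=0$;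 $G^1_{22}=0\neq G^2_{11}$ iff $P=\tfrac12(j^1_1-j^2_2-\Delta)Q$ and $Q\neq0$; $G^1_{22}\neq0=G^2_{11}$ iff $P=\tfrac12(j^1_1-j^2_2+\Delta)Q$ and $Q\neq0$; and $G^1_{22}\neq0\neq G^2_{11}$ iff $P\neq\tfrac12(j^1_1-j^2_2\pm\Delta)Q$ for both signs.
   Context: $\mathbf{J}=\begin{pmatrix} j^1_1 & j^1_2\\ j^2_1 & j^2_2\end{pmatrix}$ is the current Jacobian, $\mathbf{H}^\lambda$ ($\lambda=1,2$) is the Hessian matrix with entries $H^\lambda_{\beta\gamma}=j^\lambda_{\beta\gamma}$. For an invertible diagonalizer $\mathbf{R}$ (its first row is a left eigenvector of $\mathbf{J}$ for $v_+$, its second row a left eigenvector for $v_-$), the mode coupling matrices are $\mathbf{G}^\alpha=\tfrac12\sum_{\lambda=1}^2R_{\alpha\lambda}(\mathbf{R}^{-1})^T\mathbf{H}^\lambda\mathbf{R}^{-1}$, $\alpha=1,2$, with entries $G^\alpha_{\beta\gamma}$; whether a given entry vanishes does not depend on the normalization of the rows of $\mathbf{R}$. (Interpretation in mode coupling theory, not needed for the claim: the case $G^1_{11}=G^2_{22}=0$ is the non-KPZ case; within it, $G^1_{22}=G^2_{11}=0$ corresponds to two diffusive modes, exactly one vanishing corresponds to one diffusive and one $z=3/2$ Lévy mode, and both nonzero to two golden-mean Lévy modes.) *)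

(* Defs.v *)
(* algebraic statement over an arbitrary real field. *)
From HB Require Import structures.
From mathcomp Require Import all_boot all_order all_algebra.
Set Implicit Arguments. Unset Strict Implicit. Unset Printing Implicit Defensive.
Import Order.TTheory GRing.Theory Num.Theory.
Local Open Scope ring_scope.

(* Index 1 and 2 of the paper correspond to ord0 and ord_max in 'I_2. *)
Definition i1 : 'I_2 := @ord0 1.
Definition i2 : 'I_2 := @ord_max 1.

Definition Jmat {R : ringType} (j11 j12 j21 j22 : R) : 'M[R]_2 :=
  \matrix_(a < 2, b < 2)
    if a == i1 then (if b == i1 then j11 else j12)
    else (if b == i1 then j21 else j22).

Definition symmat {R : ringType} (x11 x12 x22 : R) : 'M[R]_2 :=
  \matrix_(b < 2, c < 2)
    if (b == i1) && (c == i1) then x11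
    else if (b == i2) && (c == i2) then x22 else x12.

(* Hessians H^1, H^2 : H^lam_{beta gamma} = j^lam_{beta gamma}. *)
Definition Hmats {R : ringType} (h111 h112 h122 h211 h212 h222 : R)
  (lam : 'I_2) : 'M[R]_2 :=
  if lam == i1 then symmat h111 h112 h122 else symmat h211 h212 h222.

Definition diag2 {R : ringType} (x y : R) : 'M[R]_2 :=
  \matrix_(a < 2, b < 2) if a == b then (if a == i1 then x else y) else 0.

Definition Gmat {R : fieldType} (Rm : 'M[R]_2) (H : 'I_2 -> 'M[R]_2)
  (alpha : 'I_2) : 'M[R]_2 :=
  2^-1 *: \sum_(lam < 2) (Rm alpha lam *: ((invmx Rm)^T *m H lam *m invmx Rm)).

(* Main.v *)
Require Import Defs.
From HB Require Import structures.
From mathcomp Require Import all_boot all_order all_algebra.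
From mathcomp Require Import ring lra.
Import Order.TTheory GRing.Theory Num.Theory.
Local Open Scope ring_scope.

Lemma sum2 (R : realFieldType) (F : 'I_2 -> R) : \sum_(i < 2) F i = F i1 + F i2.
Proof. rewrite big_ord_recl big_ord1; congr (_ + F _); exact: val_inj. Qed.
Lemma i21 : (i2 == i1) = false. Proof. by []. Qed.
Lemma i12 : (i1 == i2) = false. Proof. by []. Qed.

Section Alg.
Variable R : realFieldType.
Definition F (j12 j21 h111 h112 h122 h211 h212 h222 sa sb : R) :=
  j21*(j12^+2*h111 + 2*j12*h112*sb + h122*sb^+2)
  + sa*(j12^+2*h211 + 2*j12*h212*sb + h222*sb^+2).

Lemma FA (j11 j12 j21 j22 h111 h112 h122 h211 h212 h222 s1 s2 : R) :
  s1 + s2 = j22 - j11 -> s1 * s2 = - (j12 * j21) ->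
  F j12 j21 h111 h112 h122 h211 h212 h222 s1 s1 =
  j12 * j21 * (j12 * (2 * h212 + h111) + j21 * h122 + h222 * (j22 - j11))
  + s1 * (j12 * (j21 * (2 * h112 + h222) + j12 * h211 - h111 * (j22 - j11))
          + (j22 - j11) * (j12 * (2 * h212 + h111) + j21 * h122 + h222 * (j22 - j11))).
Proof.
move=> hs hp.
have z : s1^+2 - (j22 - j11) * s1 - j12 * j21 = 0.
  by rewrite -hs -[j12 * j21]opprK -hp; ring.
rewrite /F.
match goal with |- _ = ?r => transitivity (r + (s1^+2 - (j22 - j11) * s1 - j12 * j21) *
   (h222 * s1 + j21 * h122 + 2 * j12 * h212 + h222 * (j22 - j11))) end.
  ring.
by rewrite z mul0r addr0.
Qed.

Lemma FB (j11 j12 j21 j22 h111 h112 h122 h211 h212 h222 s1 s2 : R) :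
  j21 != 0 -> j12 != 0 ->
  s1 + s2 = j22 - j11 -> s1 * s2 = - (j12 * j21) ->
  j21 * (2 * h112 + h222) + j12 * h211 - h111 * (j22 - j11) = 0 ->
  j12 * (2 * h212 + h111) + j21 * h122 + h222 * (j22 - j11) = 0 ->
  j21 * F j12 j21 h111 h112 h122 h211 h212 h222 s1 s2 =
  - ((s1 - s2) * s2) * ((j21 ^+ 2 * h122 + j12 * j21 * h111) + s1 * (j21 * h222 + j12 * h211)).
Proof.
move=> n21 n12 hs hp c1 c2.
have e112 : h112 = (h111 * (j22 - j11) - j21 * h222 - j12 * h211) / (2 * j21).
  transitivity (h112 - (j21 * (2 * h112 + h222) + j12 * h211 - h111 * (j22 - j11)) / (2 * j21)).
    by rewrite c1 mul0r subr0.
  by field; rewrite n21.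
have e212 : h212 = (- j12 * h111 - j21 * h122 - h222 * (j22 - j11)) / (2 * j12).
  transitivity (h212 - (j12 * (2 * h212 + h111) + j21 * h122 + h222 * (j22 - j11)) / (2 * j12)).
    by rewrite c2 mul0r subr0.
  by field; rewrite n12.
have e11 : j11 = j22 - s1 - s2 by rewrite -addrA -opprD hs; ring.
have e12 : j12 = - (s1 * s2) / j21 by rewrite hp opprK mulfK.
have ns : s1 * s2 != 0 by rewrite hp oppr_eq0 mulf_neq0.
rewrite /F e112 e212 e11 e12.
field.
by rewrite n21; move: ns; rewrite mulf_eq0 negb_or => /andP[-> ->].
Qed.
End Alg.

Lemma Gval (R : realFieldType) (Rm : 'M[R]_2) h111 h112 h122 h211 h212 h222
  (al be : 'I_2) (j12 j21 sa sb : R) :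
  j12 != 0 -> j21 != 0 ->
  Rm al i2 * j21 = sa * Rm al i1 ->
  invmx Rm i2 be * j12 = sb * invmx Rm i1 be ->
  Gmat Rm (Hmats h111 h112 h122 h211 h212 h222) al be be =
  Rm al i1 * (invmx Rm i1 be)^+2 / (2 * j21 * j12^+2) *
    F R j12 j21 h111 h112 h122 h211 h212 h222 sa sb.
Proof.
move=> n12 n21 eb eq.
rewrite /Gmat /Hmats !mxE summxE sum2 !mxE eqxx i21.
rewrite !sum2 !mxE !sum2 !mxE /= ?eqxx ?i21 ?i12 /=.
have hb : Rm al i2 = sa * Rm al i1 / j21 by rewrite -eb mulfK.
have hq : invmx Rm i2 be = sb * invmx Rm i1 be / j12 by rewrite -eq mulfK.
rewrite hb hq /F.
by field; rewrite n12 n21.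
Qed.

Lemma zero_iff (R : realFieldType) (k x : R) : k != 0 -> (k * x = 0 <-> x = 0).
Proof. move=> nk; split=> [/eqP|->]; last by rewrite mulr0.
by rewrite mulf_eq0 (negbTE nk) => /eqP. Qed.

Lemma solveA (R : realFieldType) (k j12 t x y X Y : R) : x != y -> k != 0 -> j12 != 0 ->
 (k*Y + x*(j12*X + t*Y) = 0 /\ k*Y + y*(j12*X+t*Y) = 0) <-> (X = 0 /\ Y = 0).
Proof.
move=> nxy nk n12; split; last by case=> -> ->; split; ring.
case=> h1 h2.
have hB : j12*X + t*Y = 0.
  have : (x - y) * (j12*X + t*Y) = 0.
    by transitivity ((k*Y + x*(j12*X + t*Y)) - (k*Y + y*(j12*X+t*Y))); [ring | rewrite h1 h2 subrr].
  by move/eqP; rewrite mulf_eq0 subr_eq0 (negbTE nxy) /= => /eqP.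
move: h1; rewrite hB mulr0 addr0 => /eqP; rewrite mulf_eq0 (negbTE nk) /= => /eqP y0.
split=> //; move: hB; rewrite y0 mulr0 addr0 => /eqP; rewrite mulf_eq0 (negbTE n12) /= => /eqP //.
Qed.

Lemma lin_iff (R : realFieldType) (x s y : R) : (x + s * y = 0) <-> (x = - s * y).
Proof. split=> h; last by rewrite h mulNr addNr.
by rewrite -[x](addrK (s*y)) h sub0r mulNr. Qed.

Lemma conseq (R : realFieldType) (g1 g2 P Q cm cp X j21 : R) :
  cm != cp -> (g1 = 0 <-> P = cm*Q) -> (g2 = 0 <-> P = cp*Q) -> P = j21 * X -> j21 != 0 ->
     ((g1 = 0 /\ g2 = 0) <-> (X = 0 /\ Q = 0)) /\
     ((g1 = 0 /\ g2 <> 0) <-> (P = cm * Q /\ Q <> 0)) /\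
     ((g1 <> 0 /\ g2 = 0) <-> (P = cp * Q /\ Q <> 0)) /\
     ((g1 <> 0 /\ g2 <> 0) <-> (P <> cm * Q /\ P <> cp * Q)).
Proof.
move=> ncc e1 e2 hP n21.
have k1 : P = cm*Q -> P = cp*Q -> Q = 0.
  move=> h1 h2; have : (cm - cp)*Q = 0 by rewrite mulrBl -h1 -h2 subrr.
  by move/eqP; rewrite mulf_eq0 subr_eq0 (negbTE ncc) /= => /eqP.
have k2 : P = cm*Q -> Q = 0 -> P = cp*Q by move=> -> ->; rewrite !mulr0.
have k3 : P = cp*Q -> Q = 0 -> P = cm*Q by move=> -> ->; rewrite !mulr0.
have k4 : P = cm*Q -> Q = 0 -> X = 0.
  move=> h1 q0; move: h1; rewrite q0 mulr0 hP => /eqP.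
  by rewrite mulf_eq0 (negbTE n21) => /eqP.
have k5 : X = 0 -> Q = 0 -> P = cm*Q by move=> x0 ->; rewrite hP x0 !mulr0.
clear hP; tauto.
Qed.

Lemma coefnz (R : realFieldType) (a l j21 j12 : R) :
  a != 0 -> l != 0 -> j21 != 0 -> j12 != 0 -> a * l^+2 / (2 * j21 * j12^+2) != 0.
Proof.
move=> *; rewrite mulf_neq0 ?mulf_neq0 ?expf_neq0 ?invr_eq0 ?mulf_neq0 ?expf_neq0 //.
by rewrite pnatr_eq0.
Qed.

Theorem theorem3 (R : realFieldType)
  (j11 j12 j21 j22 h111 h112 h122 h211 h212 h222 Delta : R)
  (Rm : 'M[R]_2) :
  j12 * j21 != 0 ->
  Delta ^+ 2 = (j11 - j22) ^+ 2 + 4 * j12 * j21 ->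
  0 < Delta ->
  Rm \in unitmx ->
  Rm *m Jmat j11 j12 j21 j22 *m invmx Rm =
    diag2 (2^-1 * (j11 + j22 + Delta)) (2^-1 * (j11 + j22 - Delta)) ->
  let G := Gmat Rm (Hmats h111 h112 h122 h211 h212 h222) in
  let condA1 := j21 * (2 * h112 + h222) + j12 * h211 - h111 * (j22 - j11) = 0 in
  let condA2 := j12 * (2 * h212 + h111) + j21 * h122 + h222 * (j22 - j11) = 0 in
  let P := j21 ^+ 2 * h122 + j12 * j21 * h111 in
  let Q := j21 * h222 + j12 * h211 in
  let cm := 2^-1 * (j11 - j22 - Delta) in
  let cp := 2^-1 * (j11 - j22 + Delta) in
  (* (a) *)
  ((G i1 i1 i1 = 0 /\ G i2 i2 i2 = 0) <-> (condA1 /\ condA2)) /\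
  (* (b) and consequences *)
  (condA1 -> condA2 ->
     (G i1 i2 i2 = 0 <-> P = cm * Q) /\
     (G i2 i1 i1 = 0 <-> P = cp * Q) /\
     ((G i1 i2 i2 = 0 /\ G i2 i1 i1 = 0) <->
        (j21 * h122 + j12 * h111 = 0 /\ j21 * h222 + j12 * h211 = 0)) /\
     ((G i1 i2 i2 = 0 /\ G i2 i1 i1 <> 0) <-> (P = cm * Q /\ Q <> 0)) /\
     ((G i1 i2 i2 <> 0 /\ G i2 i1 i1 = 0) <-> (P = cp * Q /\ Q <> 0)) /\
     ((G i1 i2 i2 <> 0 /\ G i2 i1 i1 <> 0) <-> (P <> cm * Q /\ P <> cp * Q))).
Proof.
move=> hk hD hDp hU hdiag G cA1 cA2 P Q cm cp.
have n12 : j12 != 0 by move: hk; rewrite mulf_eq0 negb_or => /andP[].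
have n21 : j21 != 0 by move: hk; rewrite mulf_eq0 negb_or => /andP[].
have nD : Delta != 0 by rewrite (gt_eqF hDp).
set vp := 2^-1 * (j11 + j22 + Delta) in hdiag.
set vm := 2^-1 * (j11 + j22 - Delta) in hdiag.
set J := Jmat j11 j12 j21 j22 in hdiag.
have hLR : invmx Rm *m Rm = 1 by rewrite mulVmx.
have hRL : Rm *m invmx Rm = 1 by rewrite mulmxV.
have h1 : Rm *m J = diag2 vp vm *m Rm by rewrite -hdiag -(mulmxA (Rm *m J)) hLR mulmx1.
have h2 : J *m invmx Rm = invmx Rm *m diag2 vp vm by rewrite -hdiag !mulmxA hLR mul1mx.
have e1 := congr1 (fun M : 'M[R]_2 => M i1 i1) h1.
have e2 := congr1 (fun M : 'M[R]_2 => M i2 i1) h1.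
have e3 := congr1 (fun M : 'M[R]_2 => M i1 i1) h2.
have e4 := congr1 (fun M : 'M[R]_2 => M i1 i2) h2.
have e5 := congr1 (fun M : 'M[R]_2 => M i1 i1) hRL.
have e6 := congr1 (fun M : 'M[R]_2 => M i2 i2) hRL.
rewrite /= !mxE !sum2 !mxE ?eqxx ?i21 ?i12 /= in e1 e2 e3 e4 e5 e6.
set L := invmx Rm in e1 e2 e3 e4 e5 e6 *.
set sp := vp - j11. set sm := vm - j11.
have f1 : Rm i1 i2 * j21 = sp * Rm i1 i1.
  by apply: (addrI (Rm i1 i1 * j11)); rewrite e1 /sp; ring.
have f2 : Rm i2 i2 * j21 = sm * Rm i2 i1.
  by apply: (addrI (Rm i2 i1 * j11)); rewrite e2 /sm; ring.
have f3 : L i2 i1 * j12 = sp * L i1 i1.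
  by apply: (addrI (j11 * L i1 i1)); rewrite (mulrC (L i2 i1)) e3 /sp; ring.
have f4 : L i2 i2 * j12 = sm * L i1 i2.
  by apply: (addrI (j11 * L i1 i2)); rewrite (mulrC (L i2 i2)) e4 /sm; ring.
have na : Rm i1 i1 != 0.
  apply/eqP=> a0; have : Rm i1 i2 * j21 == 0 by rewrite f1 a0 mulr0.
  rewrite mulf_eq0 (negbTE n21) orbF => /eqP b0.
  by move: e5; rewrite a0 b0 !mul0r addr0 => /esym/eqP; rewrite oner_eq0.
have nc : Rm i2 i1 != 0.
  apply/eqP=> a0; have : Rm i2 i2 * j21 == 0 by rewrite f2 a0 mulr0.
  rewrite mulf_eq0 (negbTE n21) orbF => /eqP b0.
  by move: e6; rewrite a0 b0 !mul0r addr0 => /esym/eqP; rewrite oner_eq0.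
have nl1 : L i1 i1 != 0.
  apply/eqP=> a0; have : L i2 i1 * j12 == 0 by rewrite f3 a0 mulr0.
  rewrite mulf_eq0 (negbTE n12) orbF => /eqP b0.
  by move: e5; rewrite a0 b0 !mulr0 addr0 => /esym/eqP; rewrite oner_eq0.
have nl2 : L i1 i2 != 0.
  apply/eqP=> a0; have : L i2 i2 * j12 == 0 by rewrite f4 a0 mulr0.
  rewrite mulf_eq0 (negbTE n12) orbF => /eqP b0.
  by move: e6; rewrite a0 b0 !mulr0 addr0 => /esym/eqP; rewrite oner_eq0.
have hsum : sp + sm = j22 - j11 by rewrite /sp /sm /vp /vm; field.
have hprod : sp * sm = - (j12 * j21).
  transitivity (4^-1 * ((j22 - j11)^+2 - Delta^+2)); first by rewrite /sp /sm /vp /vm; field.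
  by rewrite hD; field.
have hsum' : sm + sp = j22 - j11 by rewrite addrC.
have hprod' : sm * sp = - (j12 * j21) by rewrite mulrC.
have hdif : sp != sm.
  rewrite -subr_eq0.
  have -> : sp - sm = Delta by rewrite /sp /sm /vp /vm; field.
  by [].
have nsp : sp != 0 by apply/eqP=> sp0; move: hk; rewrite -oppr_eq0 -hprod sp0 mul0r eqxx.
have nsm : sm != 0 by apply/eqP=> sm0; move: hk; rewrite -oppr_eq0 -hprod sm0 mulr0 eqxx.
have hcm : cm = - sp by rewrite /cm /sp /vp; field.
have hcp : cp = - sm by rewrite /cp /sm /vm; field.
have g111 : G i1 i1 i1 = _ := @Gval R Rm h111 h112 h122 h211 h212 h222 _ _ _ _ _ _ n12 n21 f1 f3.
have g222 : G i2 i2 i2 = _ := @Gval R Rm h111 h112 h122 h211 h212 h222 _ _ _ _ _ _ n12 n21 f2 f4.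
have g122 : G i1 i2 i2 = _ := @Gval R Rm h111 h112 h122 h211 h212 h222 _ _ _ _ _ _ n12 n21 f1 f4.
have g211 : G i2 i1 i1 = _ := @Gval R Rm h111 h112 h122 h211 h212 h222 _ _ _ _ _ _ n12 n21 f2 f3.
rewrite g111 g222 g122 g211 !zero_iff ?coefnz //.
split.
  rewrite (FA _ _ _ _ _ _ _ _ _ _ _ _ _  hsum hprod) (FA _ _ _ _ _ _ _ _ _ _ _ _ _  hsum' hprod').
  by apply: solveA.
move=> c1 c2.
have b1 := FB _ _ _ _ _ _ _ _ _ _ _ _ _  n21 n12 hsum hprod c1 c2.
have b2 := FB _ _ _ _ _ _ _ _ _ _ _ _ _  n21 n12 hsum' hprod' c1 c2.
have E1 : F R j12 j21 h111 h112 h122 h211 h212 h222 sp sm = 0 <-> P = cm * Q.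
  rewrite -(zero_iff _ _ _ n21) b1 zero_iff; last first.
    by rewrite oppr_eq0 mulf_neq0 // subr_eq0.
  by rewrite hcm lin_iff.
have E2 : F R j12 j21 h111 h112 h122 h211 h212 h222 sm sp = 0 <-> P = cp * Q.
  rewrite -(zero_iff _ _ _ n21) b2 zero_iff; last first.
    by rewrite oppr_eq0 mulf_neq0 // subr_eq0 eq_sym.
  by rewrite hcp lin_iff.
have ncc : cm != cp by rewrite hcm hcp eqr_opp.
have hP : P = j21 * (j21 * h122 + j12 * h111) by rewrite /P; ring.
split; first exact: E1.
split; first exact: E2.
exact: (@conseq R (F R j12 j21 h111 h112 h122 h211 h212 h222 sp sm) (F R j12 j21 h111 h112 h122 h211 h212 h222 sm sp) P Q cm cp (j21 * h122 + j12 * h111) j21 ncc E1 E2 hP n21).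
Qed.
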